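(* Let $\phi:M_D(\mathbb{C})\to M_D(\mathbb{C})$ be a primitive Schwarz map. Then $\phi$ has spectral radius $1$ if and only if $\phi$ is unital, i.e. $\phi(I)=I$.
   Context: $M_D(\mathbb{C})$ is the algebra of complex $D\times D$ matrices. A linear map $\phi$ on $M_D(\mathbb{C})$ is a Schwarz map if $\phi(a^*a)\ge\phi(a)^*\phi(a)$ for all $a$ (in the Loewner order); unitality is not part of this definition. $\phi$ is primitive if there is $n\in\mathbb{N}$ such that $\phi^n$ maps every nonzero positive semidefinite matrix to a positive definite matrix. The spectral radius is that of $\phi$ as a linear operator on the vector space $M_D(\mathbb{C})$. *)

(* Defs.v *)
From HB Require Import structures.
From mathcomp Require Import all_boot all_order all_algebra.
From mathcomp Require Import complex.
From mathcomp Require Import reals Rstruct.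
From Stdlib Require Import Rdefinitions.
Set Implicit Arguments.
Unset Strict Implicit.
Unset Printing Implicit Defensive.
Import Order.TTheory GRing.Theory Num.Theory.
Local Open Scope ring_scope.

Definition C : numClosedFieldType := Rdefinitions.R[i].

Definition adjmx {D : nat} (A : 'M[C]_D) : 'M[C]_D := (map_mx Num.conj A)^T.

Definition psd {D : nat} (A : 'M[C]_D) : Prop :=
  adjmx A = A /\ forall v : 'cV[C]_D, 0 <= ((map_mx Num.conj v)^T *m A *m v) 0 0.

Definition pd {D : nat} (A : 'M[C]_D) : Prop :=
  adjmx A = A /\ forall v : 'cV[C]_D, v != 0 -> 0 < ((map_mx Num.conj v)^T *m A *m v) 0 0.

Definition loewner_le {D : nat} (A B : 'M[C]_D) : Prop := psd (B - A).

Definition schwarz_map {D : nat} (phi : {linear 'M[C]_D -> 'M[C]_D}) : Prop :=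
  forall a : 'M[C]_D, loewner_le (adjmx (phi a) *m phi a) (phi (adjmx a *m a)).

Definition primitive {D : nat} (phi : {linear 'M[C]_D -> 'M[C]_D}) : Prop :=
  exists n : nat, forall A : 'M[C]_D, psd A -> A != 0 -> pd (iter n phi A).

Definition lin_eigenvalue {D : nat} (phi : {linear 'M[C]_D -> 'M[C]_D}) (l : C) : Prop :=
  exists X : 'M[C]_D, X != 0 /\ phi X = l *: X.

Definition is_spectral_radius {D : nat} (phi : {linear 'M[C]_D -> 'M[C]_D}) (r : C) : Prop :=
  (exists l, lin_eigenvalue phi l /\ `|l| = r) /\
  (forall l, lin_eigenvalue phi l -> `|l| <= r).

(* Main.v *)
Require Import Defs.
From HB Require Import structures.
From mathcomp Require Import all_boot all_order all_algebra.
From mathcomp Require Import sesquilinear spectral.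
Import Order.TTheory GRing.Theory Num.Theory.
Local Open Scope ring_scope.
Set Implicit Arguments.
Unset Strict Implicit.
Unset Printing Implicit Defensive.

Section Aux.
Variable K : numClosedFieldType.
Variable D : nat.
Definition adj (A : 'M[K]_D) : 'M[K]_D := (map_mx Num.conj A)^T.
Implicit Types A B : 'M[K]_D.

Definition qf (A : 'M[K]_D) (v : 'cV[K]_D) : K :=
  ((map_mx Num.conj v)^T *m A *m v) 0 0.

Lemma adjmxM A B : adj (A *m B) = adj B *m adj A.
Proof. by rewrite /adj map_mxM trmx_mul. Qed.

Lemma adjmxK A : adj (adj A) = A.
Proof. by apply/matrixP => i j; rewrite !mxE conjCK. Qed.

Lemma adjmxD A B : adj (A + B) = adj A + adj B.
Proof. by apply/matrixP => i j; rewrite !mxE rmorphD. Qed.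

Lemma adjmxN A : adj (- A) = - adj A.
Proof. by apply/matrixP => i j; rewrite !mxE rmorphN. Qed.

Lemma adjmxB A B : adj (A - B) = adj A - adj B.
Proof. by rewrite adjmxD adjmxN. Qed.

Lemma adjmxZ (c : K) A : adj (c *: A) = c^* *: adj A.
Proof. by apply/matrixP => i j; rewrite !mxE rmorphM. Qed.

Lemma adjmx_scalar (c : K) : adj (c%:M : 'M[K]_D) = c^*%:M.
Proof. by apply/matrixP => i j; rewrite !mxE rmorphMn eq_sym. Qed.

Lemma adjmx1 : adj (1%:M : 'M[K]_D) = 1%:M.
Proof. by rewrite adjmx_scalar rmorph1. Qed.

Lemma adjmx_diag (d : 'rV[K]_D) : adj (diag_mx d) = diag_mx (map_mx Num.conj d).
Proof. by apply/matrixP => i j; rewrite !mxE rmorphMn eq_sym; case: eqP => [->|]. Qed.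

Lemma conj_vec_mul B (v : 'cV[K]_D) :
  (map_mx Num.conj (B *m v))^T = (map_mx Num.conj v)^T *m adj B.
Proof. by rewrite map_mxM trmx_mul. Qed.

Lemma qf_congr A B v : qf (adj B *m A *m B) v = qf A (B *m v).
Proof. by rewrite /qf conj_vec_mul !mulmxA. Qed.

Lemma qfD A B v : qf (A + B) v = qf A v + qf B v.
Proof. by rewrite /qf mulmxDr mulmxDl mxE. Qed.

Lemma qfN A v : qf (- A) v = - qf A v.
Proof. by rewrite /qf mulmxN mulNmx mxE. Qed.

Lemma qfB A B v : qf (A - B) v = qf A v - qf B v.
Proof. by rewrite qfD qfN. Qed.

Lemma qfZ (c : K) A v : qf (c *: A) v = c * qf A v.
Proof. by rewrite /qf -scalemxAr -scalemxAl mxE. Qed.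

Lemma qf0v A : qf A 0 = 0.
Proof. by rewrite /qf mulmx0 mxE. Qed.

Lemma qf0A v : qf 0 v = 0.
Proof. by rewrite /qf mulmx0 mul0mx mxE. Qed.

Lemma qf_diag (d : 'rV[K]_D) v :
  qf (diag_mx d) v = \sum_j d 0 j * `|v j 0| ^+ 2.
Proof.
rewrite /qf mul_mx_diag mxE; apply: eq_bigr => j _.
by rewrite !mxE normCKC mulrA [_ * d 0 j]mulrC -mulrA.
Qed.

Lemma qf1E v : qf 1%:M v = \sum_j `|v j 0| ^+ 2.
Proof.
rewrite -diag_const_mx qf_diag; apply: eq_bigr => j _.
by rewrite mxE mul1r.
Qed.

Lemma qf_delta (d : 'rV[K]_D) i : qf (diag_mx d) (delta_mx i 0) = d 0 i.
Proof.
rewrite qf_diag (bigD1 i) //=.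
rewrite big1 => [|j ji]; last first.
  by rewrite mxE; case: eqP ji => // _ _; rewrite andFb mulr0n normr0 expr0n mulr0.
by rewrite mxE !eqxx andbT mulr1n normr1 expr1n mulr1 addr0.
Qed.


Definition psdK (A : 'M[K]_D) : Prop := adj A = A /\ forall v, 0 <= qf A v.
Definition pdK (A : 'M[K]_D) : Prop := adj A = A /\ forall v, v != 0 -> 0 < qf A v.
Definition leK (A B : 'M[K]_D) : Prop := psdK (B - A).

Lemma psdD A B : psdK A -> psdK B -> psdK (A + B).
Proof.
move=> [hA qA] [hB qB]; split; first by rewrite adjmxD hA hB.
by move=> v; rewrite qfD addr_ge0.
Qed.

Lemma psdZ (c : K) A : 0 <= c -> psdK A -> psdK (c *: A).
Proof.
move=> c0 [hA qA]; split; first by rewrite adjmxZ hA geC0_conj.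
by move=> v; rewrite qfZ mulr_ge0.
Qed.

Lemma psd_congr A B : psdK A -> psdK (adj B *m A *m B).
Proof.
move=> [hA qA]; split; last by move=> v; rewrite qf_congr.
by rewrite !adjmxM adjmxK hA mulmxA.
Qed.

Lemma qf1_ge0 v : 0 <= qf 1%:M v.
Proof. by rewrite qf1E sumr_ge0 // => j _; rewrite exprn_ge0. Qed.

Lemma psd_XX B : psdK (adj B *m B).
Proof.
have -> : adj B *m B = adj B *m 1%:M *m B by rewrite mulmx1.
apply: psd_congr; split; first by rewrite adjmx1.
exact: qf1_ge0.
Qed.

Lemma psd_diag (d : 'rV[K]_D) : (forall i, 0 <= d 0 i) -> psdK (diag_mx d).
Proof.
move=> hd; split.
  rewrite adjmx_diag; congr diag_mx; apply/matrixP => i j.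
  by rewrite mxE ord1 geC0_conj.
move=> v; rewrite qf_diag sumr_ge0 // => j _.
by rewrite mulr_ge0 // exprn_ge0.
Qed.

Lemma leK_trans A B E : leK A B -> leK B E -> leK A E.
Proof.
rewrite /leK => h1 h2; have := psdD h2 h1.
by rewrite addrA subrK.
Qed.

Lemma leK_qf A B v : leK A B -> qf A v <= qf B v.
Proof. by move=> [_ /(_ v)]; rewrite qfB subr_ge0. Qed.

Lemma leK_refl A : leK A A.
Proof.
rewrite /leK subrr; split; first by apply/matrixP => i j; rewrite !mxE rmorph0.
by move=> v; rewrite qf0A.
Qed.


Lemma adj_tC (M : 'M[K]_D) : map_mx Num.conj (M^T) = adj M.
Proof. by rewrite /adj map_trmx. Qed.

Lemma spec_decomp A : adj A = A -> exists P (d : 'rV[K]_D),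
  [/\ P *m adj P = 1%:M, adj P *m P = 1%:M & A = adj P *m diag_mx d *m P].
Proof.
move=> hA.
have nA : A \is normalmx by apply/normalmxP; rewrite adj_tC hA.
have /orthomx_spectralP := nA.
set P := spectralmx A; set d := spectral_diag A => eA.
have uP : P \is unitarymx := spectral_unitarymx A.
have PP : P *m adj P = 1%:M by rewrite -adj_tC; apply/unitarymxP.
exists P, d; split => //; first exact: mulmx1C.
by rewrite {1}eA invmx_unitary // adj_tC.
Qed.

Lemma psd_decomp A : psdK A -> exists P (d : 'rV[K]_D),
  [/\ P *m adj P = 1%:M, adj P *m P = 1%:M, A = adj P *m diag_mx d *m P
    & forall i, 0 <= d 0 i].
Proof.
move=> [hA qA]; have [P [d [h1 h2 eA]]] := spec_decomp hA.
exists P, d; split => // i.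
rewrite -qf_delta.
have -> : diag_mx d = adj (adj P) *m A *m adj P.
  by rewrite adjmxK eA !mulmxA h1 mul1mx -mulmxA h1 mulmx1.
by rewrite qf_congr.
Qed.

Lemma psd_sqrt A : psdK A -> exists B, A = adj B *m B.
Proof.
move=> /psd_decomp [P [d [h1 h2 eA hd]]].
pose s : 'rV[K]_D := \row_j sqrtC (d 0 j).
exists (diag_mx s *m P).
rewrite adjmxM adjmx_diag.
have -> : map_mx Num.conj s = s.
  by apply/matrixP => i j; rewrite !mxE geC0_conj // sqrtC_ge0.
rewrite !mulmxA -[adj P *m _ *m _]mulmxA mulmx_diag eA; congr (_ *m _ *m _).
congr diag_mx; apply/matrixP => i j; by rewrite !mxE -expr2 sqrtCK !ord1.
Qed.


Lemma seq_max (T : eqType) (f : T -> K) (s : seq T) x :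
  x \in s -> (forall y, 0 <= f y) ->
  exists2 m, m \in s & forall y, y \in s -> f y <= f m.
Proof.
elim: s x => // a s IH x _ hf.
case: s IH => [|b s] IH.
  exists a; first exact: mem_head.
  by move=> y; rewrite inE => /eqP ->.
have [m ms hm] := IH b (mem_head _ _) hf.
have /orP [h|h] := real_leVge (ger0_real (hf a)) (ger0_real (hf m)).
- exists m; first by rewrite inE ms orbT.
  by move=> y; rewrite inE => /orP [/eqP -> //|]; exact: hm.
- exists a; first exact: mem_head.
  move=> y; rewrite inE => /orP [/eqP -> //|/hm] hy; exact: le_trans hy h.
Qed.

Lemma exists_max (f : 'I_D -> K) : (0 < D)%N -> (forall i, 0 <= f i) ->
  exists i0, forall j, f j <= f i0.
Proof.
move=> hD hf.
have [m _ hm] : exists2 m, m \in enum 'I_D & forall y, y \in enum 'I_D -> f y <= f m.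
  by apply: (@seq_max _ f _ (Ordinal hD)) => //; rewrite mem_enum.
by exists m => j; apply: hm; rewrite mem_enum.
Qed.

Lemma psd_top Y : psdK Y -> Y != 0 -> (0 < D)%N -> exists c v,
  [/\ 0 < c, leK Y (c%:M), qf Y v = c & qf 1%:M v = 1].
Proof.
move=> hY Yn0 hD; have [P [d [h1 h2 eY hd]]] := psd_decomp hY.
have [i0 hi0] := @exists_max (fun i => d 0 i) hD hd.
exists (d 0 i0), (adj P *m delta_mx i0 0); split.
- rewrite lt_def hd andbT; apply: contraNneq Yn0 => c0; rewrite eY.
  have -> : d = 0.
    apply/matrixP => i j; rewrite ord1 mxE; apply/le_anti.
    by rewrite hd andbT -c0 hi0.
  have -> : diag_mx (0 : 'rV[K]_D) = 0 by apply/matrixP => i j; rewrite !mxE mul0rn.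
  by rewrite mulmx0 mul0mx.
- rewrite /leK.
  have -> : (d 0 i0)%:M - Y = adj P *m diag_mx (const_mx (d 0 i0) - d) *m P.
    have -> : diag_mx (const_mx (d 0 i0) - d) = (d 0 i0)%:M - diag_mx d.
      by apply/matrixP => i j; rewrite !mxE mulrnBl.
    rewrite mulmxBr mulmxBl -eY mul_mx_scalar -scalemxAl h2.
    by congr (_ - _); apply/matrixP => i j; rewrite !mxE mulr_natr.
  apply: psd_congr; apply: psd_diag => i.
  by rewrite !mxE subr_ge0 hi0.
- rewrite -qf_congr adjmxK.
  have -> : P *m Y *m adj P = diag_mx d.
    by rewrite eY !mulmxA h1 mul1mx -mulmxA h1 mulmx1.
  exact: qf_delta.
- rewrite -qf_congr adjmxK mulmx1 h1 -diag_const_mx qf_delta.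
  by rewrite mxE.
Qed.

End Aux.

Section Phi.
Variable K : numClosedFieldType.
Variable D : nat.
Variable phi : {linear 'M[K]_D -> 'M[K]_D}.
Implicit Types A B : 'M[K]_D.

Definition schw := forall a, leK (adj (phi a) *m phi a) (phi (adj a *m a)).
Definition prim := exists n, forall A, psdK A -> A != 0 -> pdK (iter n phi A).
Definition eig (l : K) := exists X : 'M[K]_D, X != 0 /\ phi X = l *: X.
Definition specr (r : K) :=
  (exists l, eig l /\ `|l| = r) /\ (forall l, eig l -> `|l| <= r).

Lemma phi_pos A : schw -> psdK A -> psdK (phi A).
Proof.
move=> hs /psd_sqrt [B ->].
have := psdD (hs B) (psd_XX (phi B)).
by rewrite subrK.
Qed.

Lemma iterB k A B : iter k phi (A - B) = iter k phi A - iter k phi B.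
Proof. by elim: k => //= k ->; rewrite linearB. Qed.

Lemma iterZ k (c : K) A : iter k phi (c *: A) = c *: iter k phi A.
Proof. by elim: k => //= k ->; rewrite linearZ. Qed.

Lemma iter_pos k A : schw -> psdK A -> psdK (iter k phi A).
Proof. by move=> hs; elim: k => //= k IH /IH; apply: phi_pos. Qed.

Lemma iter_mono k A B : schw -> leK A B -> leK (iter k phi A) (iter k phi B).
Proof. by move=> hs h; rewrite /leK -iterB; apply: iter_pos. Qed.

Lemma XX_neq0 (X : 'M[K]_D) : X != 0 -> adj X *m X != 0.
Proof.
apply: contraNneq => h; apply/eqP/matrixP => i j.
have := qf_congr 1%:M X (delta_mx j 0).
rewrite mulmx1 h qf0A qf1E -colE => /esym /psumr_eq0P h'.
have := h' (fun k _ => exprn_ge0 2 (normr_ge0 _)) i isT; move/eqP.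
by rewrite expf_eq0 normr_eq0 !mxE => /andP [_ /eqP ->].
Qed.

Lemma schw_eig (X : 'M[K]_D) l : schw -> phi X = l *: X ->
  leK (`|l| ^+ 2 *: (adj X *m X)) (phi (adj X *m X)).
Proof.
move=> hs hX; have := hs X; rewrite hX adjmxZ -scalemxAl -scalemxAr scalerA.
by rewrite normCKC.
Qed.

End Phi.

Theorem main_gen (K : numClosedFieldType) (D : nat)
  (phi : {linear 'M[K]_D -> 'M[K]_D}) :
  (0 < D)%N -> schw phi -> prim phi -> (specr phi 1 <-> phi 1%:M = 1%:M).
Proof.
move=> hD hs hp.
set P := phi 1%:M.
have hP1 : leK P 1%:M.
  have h := hs 1%:M; rewrite adjmx1 mulmx1 -/P in h.
  have hadjP : adj P = P.
    case: h => hh _; move: hh; rewrite adjmxB adjmxM adjmxK.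
    by move/addIr.
  rewrite hadjP in h.
  rewrite /leK.
  have -> : 1%:M - P = adj (1%:M - P) *m (1%:M - P) + (P - P *m P).
    rewrite adjmxB adjmx1 hadjP mulmxBl !mulmxBr !mul1mx mulmx1.
    by rewrite subrK.
  exact: psdD (psd_XX _) h.
have hiterI : forall k, leK (iter k phi 1%:M) 1%:M.
  elim => [|k IH]; first exact: leK_refl.
  rewrite iterSr; apply: leK_trans IH; exact: iter_mono.
split.
- move=> [[l [[X [Xn0 hX]] hl]] _].
  set Y := adj X *m X.
  have hY : psdK Y := psd_XX X.
  have Yn0 : Y != 0 := XX_neq0 Xn0.
  have hYphi : leK Y (phi Y).
    by have := schw_eig hs hX; rewrite hl expr1n scale1r.
  have hYk : forall k, leK Y (iter k phi Y).
    elim => [|k IH]; first exact: leK_refl.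
    rewrite iterSr; apply: leK_trans IH _; exact: iter_mono.
  have [c [v [c0 hYc qYv q1v]]] := psd_top hY Yn0 hD.
  case: (eqVneq P 1%:M) => // hne; exfalso.
  set Q := 1%:M - P.
  have hQ : psdK Q := hP1.
  have Qn0 : Q != 0 by rewrite /Q subr_eq0 eq_sym.
  have [n hn] := hp.
  have [_ pdQ] := hn Q hQ Qn0.
  have vn0 : v != 0.
    by apply/eqP => v0; move: q1v; rewrite v0 qf0v => /eqP; rewrite eq_sym oner_eq0.
  have t0 := pdQ v vn0.
  set t := qf (iter n phi Q) v in t0.
  have e1 : c <= qf (iter n.+1 phi Y) v by rewrite -qYv; apply: leK_qf.
  have e2 : qf (iter n.+1 phi Y) v <= c * qf (iter n.+1 phi 1%:M) v.
    rewrite -qfZ -iterZ scalemx1; apply: leK_qf; exact: iter_mono.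
  have e3 : iter n.+1 phi 1%:M = iter n phi 1%:M - iter n phi Q.
    rewrite -iterB iterSr -/P /Q opprB addrC subrK //.
  have e4 : qf (iter n phi 1%:M) v <= 1 by rewrite -[X in _ <= X]q1v; apply: leK_qf.
  have : c <= c * (1 - t).
    apply: le_trans e1 (le_trans e2 _).
    apply: ler_wpM2l; first exact: ltW.
    by rewrite e3 qfB -/t lerD2r.
  rewrite mulrBr mulr1 -subr_ge0 addrAC subrr add0r oppr_ge0 => h.
  by rewrite (lt_geF (mulr_gt0 c0 t0)) in h.
- move=> hP1eq; split.
  + exists 1; split; last exact: normr1.
    exists 1%:M; split; last by rewrite scale1r.
    apply/eqP => /matrixP /(_ (Ordinal hD) (Ordinal hD)) /eqP.
    by rewrite !mxE eqxx mulr1n oner_eq0.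
  + move=> l [X [Xn0 hX]].
    have [c [v [c0 hYc qYv q1v]]] := psd_top (psd_XX X) (XX_neq0 Xn0) hD.
    have h1 := leK_qf v (schw_eig hs hX).
    have h2 : qf (phi (adj X *m X)) v <= c.
      have := leK_qf v (iter_mono 1 hs hYc).
      by rewrite /= -scalemx1 linearZ -/P hP1eq qfZ q1v mulr1.
    rewrite qfZ qYv in h1.
    have : `|l| ^+ 2 * c <= 1 * c by rewrite mul1r; exact: le_trans h1 h2.
    rewrite ler_pM2r // => hl2.
    by rewrite -(@expr_le1 _ 2 `|l|) // normr_ge0.
Qed.

Theorem proposition2p3 (D : nat) (phi : {linear 'M[C]_D -> 'M[C]_D}) :
  (0 < D)%N -> schwarz_map phi -> primitive phi ->
  (is_spectral_radius phi 1 <-> phi 1%:M = 1%:M).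
Proof.
move=> hD hs hp.
exact: (@main_gen C D phi hD hs hp).
Qed.
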